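(* Let $(A,\diamond,\circ,\lambda)$ be a left semi-truss such that $(A,\circ)$ is a group and $(A,\diamond)$ is a left cancellative semigroup with an idempotent $e$. For $x\in A$ let $x^\circ$ denote its inverse in $(A,\circ)$. Then the map $r:A\times A\to A\times A$, $$r(a,b)=\Big(a\circ e^\circ\circ\big((e\circ a^\circ\circ e)\diamond b\big),\; e\circ\big((e\circ a^\circ\circ e)\diamond b\big)^\circ\circ b\Big),$$ is a solution of the set-theoretic Yang–Baxter equation, i.e. $(r\times\mathrm{id})(\mathrm{id}\times r)(r\times\mathrm{id})=(\mathrm{id}\times r)(r\times\mathrm{id})(\mathrm{id}\times r)$ as maps $A^3\to A^3$.
   Context: A left semi-truss $(A,\diamond,\circ,\lambda)$ is a set $A$ with two associative binary operations $\diamond,\circ$ and a function $\lambda:A\times A\to A$ such that $a\circ(b\diamond c)=(a\circ b)\diamond\lambda(a,c)$ for all $a,b,c\in A$. A semigroup $(A,\diamond)$ is left cancellative if $a\diamond b=a\diamond c$ implies $b=c$. *)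

(* Defs.v *)
From Stdlib Require Import Utf8.

Definition associative {A : Type} (op : A -> A -> A) : Prop :=
  forall a b c, op a (op b c) = op (op a b) c.

Definition is_left_semi_truss {A : Type} (dia circ : A -> A -> A)
  (lam : A -> A -> A) : Prop :=
  associative dia /\ associative circ /\
  forall a b c, circ a (dia b c) = dia (circ a b) (lam a c).

Definition is_group {A : Type} (circ : A -> A -> A) (u : A) (inv : A -> A) : Prop :=
  associative circ /\
  (forall a, circ u a = a /\ circ a u = a) /\
  (forall a, circ a (inv a) = u /\ circ (inv a) a = u).

Definition left_cancellative {A : Type} (dia : A -> A -> A) : Prop :=
  forall a b c, dia a b = dia a c -> b = c.

Definition idempotent {A : Type} (dia : A -> A -> A) (e : A) : Prop :=
  dia e e = e.

Definition r_map {A : Type} (dia circ : A -> A -> A) (inv : A -> A) (e : A)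
  (p : A * A) : A * A :=
  let (a, b) := p in
  let t := dia (circ (circ e (inv a)) e) b in
  (circ (circ a (inv e)) t, circ (circ e (inv t)) b).

Definition r12 {A : Type} (r : A * A -> A * A) (x : A * A * A) : A * A * A :=
  let '(a, b, c) := x in let (a', b') := r (a, b) in (a', b', c).
Definition r23 {A : Type} (r : A * A -> A * A) (x : A * A * A) : A * A * A :=
  let '(a, b, c) := x in let (b', c') := r (b, c) in (a, b', c').

Definition is_YBE_solution {A : Type} (r : A * A -> A * A) : Prop :=
  forall x : A * A * A, r12 r (r23 r (r12 r x)) = r23 r (r12 r (r23 r x)).

(* Main.v *)
Require Import Defs.
From Stdlib Require Import Setoid.

Section Gen.
Variables (G : Type) (m : G -> G -> G) (o : G) (i : G -> G).
Hypothesis Ha : associative m.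
Hypothesis Hl : forall x, m o x = x.
Hypothesis Hr : forall x, m x o = x.
Hypothesis Hil : forall x, m (i x) x = o.
Hypothesis Hir : forall x, m x (i x) = o.

Lemma g1 x y : m (i x) (m x y) = y.
Proof. rewrite Ha, Hil, Hl; reflexivity. Qed.
Lemma g2 x y : m x (m (i x) y) = y.
Proof. rewrite Ha, Hir, Hl; reflexivity. Qed.
Lemma ginvu x y : m x y = o -> y = i x.
Proof. intros H. rewrite <- (g1 x y), H, Hr. reflexivity. Qed.
Lemma ginvM x y : i (m x y) = m (i y) (i x).
Proof. symmetry. apply ginvu. rewrite <- Ha, g2, Hir. reflexivity. Qed.
Lemma ginvK x : i (i x) = x.
Proof. symmetry. apply ginvu. apply Hil. Qed.
Lemma ginvo : i o = o.
Proof. symmetry. apply ginvu. apply Hl. Qed.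

Ltac gs := repeat progress (rewrite <- ?Ha, ?Hl, ?Hr, ?Hil, ?Hir, ?g1, ?g2, ?ginvM, ?ginvK, ?ginvo).

Variable s : G -> G -> G.
Hypothesis Hact : forall a b c, s (m a b) c = s a (s b c).
Hypothesis Hmp : forall a b c, s a (m b c) = m (s a b) (s (m (m (i (s a b)) a) b) c).

Lemma ybe_generic (p : G * G -> G * G)
  (Hp : forall x y, p (x, y) = (s x y, m (m (i (s x y)) x) y)) : is_YBE_solution p.
Proof.
  intros [[a b] c]. unfold r12, r23.
  repeat (rewrite Hp; simpl).
  set (a1 := s a b). set (b1 := m (m (i a1) a) b).
  set (b2 := s b1 c). set (b' := s b c). set (c' := m (m (i b') b) c).
  set (a'' := s a b'). set (b'' := m (m (i a'') a) b').
  assert (E1 : m a1 b1 = m a b) by (unfold b1; gs; reflexivity).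
  assert (E2 : m b' c' = m b c) by (unfold c'; gs; reflexivity).
  assert (A3 : s a1 b2 = a'').
  { unfold b2, a''. rewrite <- Hact, E1, Hact. reflexivity. }
  assert (MP1 : s a (m b c) = m a1 b2) by (unfold a1, b2, b1; apply Hmp).
  assert (MP2 : s a (m b' c') = m a'' (s b'' c')) by (unfold a'', b''; apply Hmp).
  rewrite E2 in MP2.
  assert (B3 : s b'' c' = m (i a'') (m a1 b2)).
  { rewrite <- MP1, MP2. gs. reflexivity. }
  rewrite A3, B3.
  f_equal; [f_equal|].
  - gs. reflexivity.
  - unfold b'', b1, c'. gs. reflexivity.
Qed.
End Gen.

Section Spec.
Variables (A : Type) (dia circ lam : A -> A -> A) (u : A) (inv : A -> A) (e : A).
Hypothesis Hda : associative dia.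
Hypothesis Hca : associative circ.
Hypothesis HT : forall a b c, circ a (dia b c) = dia (circ a b) (lam a c).
Hypothesis Hl : forall x, circ u x = x.
Hypothesis Hr : forall x, circ x u = x.
Hypothesis Hil : forall x, circ (inv x) x = u.
Hypothesis Hir : forall x, circ x (inv x) = u.
Hypothesis HLC : left_cancellative dia.
Hypothesis Hid : idempotent dia e.

Ltac cs := repeat progress (rewrite <- ?Hca, ?Hl, ?Hr, ?Hil, ?Hir,
   ?(g1 _ _ _ _ Hca Hl Hil), ?(g2 _ _ _ _ Hca Hl Hir),
   ?(ginvM _ _ _ _ Hca Hl Hr Hil Hir), ?(ginvK _ _ _ _ Hca Hl Hr Hil Hir),
   ?(ginvo _ _ _ _ Hca Hl Hr Hil Hir)).

Lemma L1 z : dia e z = z.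
Proof. apply (HLC e). rewrite Hda, Hid. reflexivity. Qed.

Lemma L2 z : lam u z = z.
Proof. apply (HLC e). pose proof (HT u e z) as H. rewrite !Hl in H. symmetry; exact H. Qed.

Lemma L3 x y z : lam (circ x y) z = lam x (lam y z).
Proof.
  apply (HLC (circ (circ x y) e)). rewrite <- HT, <- Hca, HT, HT, Hca. reflexivity.
Qed.

Lemma L4 x y z : lam x (dia y z) = dia (lam x y) (lam x z).
Proof.
  apply (HLC (circ x e)). rewrite <- HT, Hda, HT, HT, Hda. reflexivity.
Qed.

Lemma L5 x z : circ x z = dia (circ x e) (lam x z).
Proof. rewrite <- HT, L1. reflexivity. Qed.

Lemma L6 w v : dia w v = circ (circ w (inv e)) (lam (circ e (inv w)) v).
Proof.
  rewrite L5, <- L3. cs. rewrite L2. reflexivity.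
Qed.

Definition bm x y := circ (circ x (inv e)) y.
Definition bi x := circ (circ e (inv x)) e.
Definition sg a b := lam (circ a (inv e)) b.

Lemma L7 a b : bm a (dia (bi a) b) = sg a b.
Proof.
  unfold bm, bi, sg. rewrite HT. cs. apply L1.
Qed.

Lemma bassoc : associative bm.
Proof. intros x y z. unfold bm. cs. reflexivity. Qed.

Lemma sact a b c : sg (bm a b) c = sg a (sg b c).
Proof. unfold sg, bm. rewrite <- L3. cs. reflexivity. Qed.

Lemma smp a b c : sg a (bm b c) = bm (sg a b) (sg (bm (bm (bi (sg a b)) a) b) c).
Proof.
  unfold sg at 1. unfold bm at 1.
  assert (E : circ (circ b (inv e)) c = dia b (lam (circ b (inv e)) c))
    by (rewrite (L5 (circ b (inv e)) c); cs; reflexivity).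
  rewrite E, L4, <- L3.
  rewrite L6. unfold bm, bi, sg. cs. rewrite <- L3. cs. reflexivity.
Qed.

Lemma bl x : bm e x = x. Proof. unfold bm. cs. reflexivity. Qed.
Lemma br x : bm x e = x. Proof. unfold bm. cs. reflexivity. Qed.
Lemma bil x : bm (bi x) x = e. Proof. unfold bm, bi. cs. reflexivity. Qed.
Lemma bir x : bm x (bi x) = e. Proof. unfold bm, bi. cs. reflexivity. Qed.

Lemma rmap_eq x y : r_map dia circ inv e (x, y) = (sg x y, bm (bm (bi (sg x y)) x) y).
Proof.
  unfold r_map. rewrite <- L7. f_equal. unfold bm, bi. cs. reflexivity.
Qed.

End Spec.

Theorem corollary2p7 (A : Type) (dia circ lam : A -> A -> A) (u : A) (inv : A -> A) (e : A) :
  is_left_semi_truss dia circ lam ->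
  is_group circ u inv ->
  left_cancellative dia ->
  idempotent dia e ->
  is_YBE_solution (r_map dia circ inv e).
Proof.
  intros [Hda [Hca HT]] [_ [Hlr Hi]] HLC Hid.
  assert (Hl : forall x, circ u x = x) by (intro; apply Hlr).
  assert (Hr : forall x, circ x u = x) by (intro; apply Hlr).
  assert (Hir : forall x, circ x (inv x) = u) by (intro; apply Hi).
  assert (Hil : forall x, circ (inv x) x = u) by (intro; apply Hi).
  apply (ybe_generic A (bm A circ inv e) e (bi A circ inv e)) with (s := sg A circ lam inv e).
  - eapply bassoc; eauto.
  - intros; eapply bl; eauto.
  - intros; eapply br; eauto.
  - intros; eapply bil; eauto.
  - intros; eapply bir; eauto.
  - intros; eapply sact with (dia := dia); eauto.
  - intros; eapply smp with (dia := dia); eauto.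
  - intros; eapply rmap_eq with (lam := lam); eauto.
Qed.
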